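(* Let $\mathsf{C}_B\subset\mathbf{R}^3$ be the cone generated by $x_{+0}=(1,1,0)$, $x_{-0}=(1,-1,0)$, $x_{0+}=(1,0,1)$, $x_{0-}=(1,0,-1)$, and let $\phi=(1,0,0)$ (as a linear form via the standard inner product). Then for every proper cone $\mathsf{C}_A\subset V_A$, $(\mathrm{Id}_{V_A}\otimes\gamma_2^\phi)(\mathsf{C}_A\otimes_{\max}\mathsf{C}_B\otimes_{\max}\mathsf{C}_B)=\mathsf{C}_A\otimes_{\min}\mathsf{C}_B$. More precisely, with $\psi_{\pm\pm}=\frac12(1,\pm1,\pm1)$, for every $y\in\mathbf{R}^3\otimes\mathbf{R}^3$, \[2\gamma_2^\phi(y)=(\psi_{++}\otimes\psi_{+-}+\psi_{+-}\otimes\psi_{++})(y)\,x_{+0}+(\psi_{-+}\otimes\psi_{--}+\psi_{--}\otimes\psi_{-+})(y)\,x_{-0}+(\psi_{++}\otimes\psi_{-+}+\psi_{-+}\otimes\psi_{++})(y)\,x_{0+}+(\psi_{+-}\otimes\psi_{--}+\psi_{--}\otimes\psi_{+-})(y)\,x_{0-}.\]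
   Context: Proper cone: closed convex cone in a finite-dimensional real vector space, containing no line, not contained in a hyperplane; $\mathsf{C}^*$ is its dual cone. $\mathsf{C}_1\otimes_{\min}\mathsf{C}_2=\mathrm{conv}\{x\otimes y:x\in\mathsf{C}_1,y\in\mathsf{C}_2\}$ and $\mathsf{C}_1\otimes_{\max}\mathsf{C}_2=\{z:(f\otimes g)(z)\ge0\ \forall f\in\mathsf{C}_1^*,g\in\mathsf{C}_2^*\}$. $\gamma_2^\phi=\frac12(\mathrm{Id}\otimes\phi+\phi\otimes\mathrm{Id}):\mathbf{R}^3\otimes\mathbf{R}^3\to\mathbf{R}^3$. *)

(* Defs.v *)
From HB Require Import structures.
From mathcomp Require Import all_boot all_order all_algebra.
From mathcomp Require Import all_classical all_reals topology normedtype.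
Set Implicit Arguments. Unset Strict Implicit. Unset Printing Implicit Defensive.
Import Order.TTheory GRing.Theory Num.Theory.
Import numFieldNormedType.Exports.
Local Open Scope classical_set_scope.
Local Open Scope ring_scope.

Section Cones.
Variable R : realType.

(* Vectors of R^n are row vectors 'rV[R]_n; linear forms on R^n are given by
   row vectors through the standard inner product. *)
Definition dotv n (f x : 'rV[R]_n) : R := \sum_(i < n) f 0 i * x 0 i.

Definition proper_cone n (C : set 'rV[R]_n) : Prop :=
  [/\ closed C,
      [/\ C 0, (forall x y, C x -> C y -> C (x + y))
         & (forall (a : R) x, 0 <= a -> C x -> C (a *: x))],
      ~ (exists p v : 'rV[R]_n, v != 0 /\ forall t : R, C (p + t *: v))
    &
      (forall (f : 'rV[R]_n) (c : R), f != 0 -> exists x, C x /\ dotv f x != c)].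

Definition dual_cone n (C : set 'rV[R]_n) : set 'rV[R]_n :=
  [set f | forall x, C x -> 0 <= dotv f x].

(* R^n (x) R^m is 'M[R]_(n, m); x (x) y has entries x_i y_j *)
Definition tens n m (x : 'rV[R]_n) (y : 'rV[R]_m) : 'M[R]_(n, m) :=
  \matrix_(i, j) (x 0 i * y 0 j).

Definition tform n m (f : 'rV[R]_n) (g : 'rV[R]_m) (z : 'M[R]_(n, m)) : R :=
  \sum_(i < n) \sum_(j < m) f 0 i * g 0 j * z i j.

Definition tmin n m (C1 : set 'rV[R]_n) (C2 : set 'rV[R]_m) : set 'M[R]_(n, m) :=
  [set z | exists k (lam : 'I_k -> R) (xs : 'I_k -> 'rV[R]_n) (ys : 'I_k -> 'rV[R]_m),
      [/\ (forall i, 0 <= lam i), \sum_(i < k) lam i = 1,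
          (forall i, C1 (xs i)), (forall i, C2 (ys i))
        & z = \sum_(i < k) lam i *: tens (xs i) (ys i)]].

(* R^n (x) R^m (x) R^p as arrays of reals *)
Definition tensor3 n m p := 'I_n -> 'I_m -> 'I_p -> R.

Definition tmax3 n m p (C1 : set 'rV[R]_n) (C2 : set 'rV[R]_m) (C3 : set 'rV[R]_p)
  : set (tensor3 n m p) :=
  [set z | forall f g h, dual_cone C1 f -> dual_cone C2 g -> dual_cone C3 h ->
      0 <= \sum_(i < n) \sum_(j < m) \sum_(l < p) f 0 i * g 0 j * h 0 l * z i j l].

(* gamma_2^phi = 1/2 (Id (x) phi + phi (x) Id) : R^3 (x) R^3 -> R^3 *)
Definition gamma2 (phi : 'rV[R]_3) (y : 'M[R]_3) : 'rV[R]_3 :=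
  \row_k (2^-1 * (\sum_(j < 3) y k j * phi 0 j + \sum_(j < 3) phi 0 j * y j k)).

Definition id_tens_gamma2 n (phi : 'rV[R]_3) (z : tensor3 n 3 3) : 'M[R]_(n, 3) :=
  \matrix_(i, k) gamma2 phi (\matrix_(j, l) z i j l) 0 k.

Definition vec3 (a b c : R) : 'rV[R]_3 :=
  \row_(i < 3) (if val i == 0%N then a else if val i == 1%N then b else c).

Definition xp0 := vec3 1 1 0.
Definition xm0 := vec3 1 (-1) 0.
Definition x0p := vec3 1 0 1.
Definition x0m := vec3 1 0 (-1).
Definition CB : set 'rV[R]_3 :=
  [set v | exists a b c d : R, [/\ 0 <= a, 0 <= b, 0 <= c, 0 <= d &
      v = a *: xp0 + b *: xm0 + c *: x0p + d *: x0m]].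
Definition phiB := vec3 1 0 0.
Definition psi (s t : R) := vec3 (2^-1) (2^-1 * s) (2^-1 * t).

End Cones.

(* Main.v *)
Require Import Defs.
From HB Require Import structures.
From mathcomp Require Import all_boot all_order all_algebra.
From mathcomp Require Import all_classical all_reals topology normedtype derive.
From mathcomp Require Import ring lra.
Import Order.TTheory GRing.Theory Num.Theory.
Import numFieldNormedType.Exports.
Local Open Scope classical_set_scope.
Local Open Scope ring_scope.

Section Bip.
Variable R : realType.

Lemma dotv_expand n (p x v : 'rV[R]_n) (t : R) :
  dotv (p + t *: x - v) (p + t *: x - v) =
  dotv (p - v) (p - v) + 2 * t * dotv (p - v) x + t ^+ 2 * dotv x x.
Proof.
rewrite /dotv !mulr_sumr -!big_split /=; apply: eq_bigr => i _; rewrite !mxE; ring.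
Qed.

Lemma dotvB n (f p q : 'rV[R]_n) : dotv f (p - q) = dotv f p - dotv f q.
Proof.
rewrite /dotv -sumrB; apply: eq_bigr => i _; rewrite !mxE; ring.
Qed.

Lemma dotv_ge0 n (f : 'rV[R]_n) : 0 <= dotv f f.
Proof. by apply: sumr_ge0 => i _; rewrite -expr2 sqr_ge0. Qed.

Lemma dotv_eq0 n (f : 'rV[R]_n) : dotv f f = 0 -> f = 0.
Proof.
move=> /psumr_eq0P H; apply/rowP => i; rewrite mxE.
have /eqP := H (fun j _ => sqr_ge0 (f 0 j)) i isT.
by rewrite mulf_eq0 orbb => /eqP.
Qed.

Lemma arith1 (a b : R) : (forall t, 0 < t -> 0 <= 2 * t * a + t ^+ 2 * b) -> 0 <= b -> 0 <= a.
Proof.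
move=> H hb; rewrite leNgt; apply/negP => ha.
pose t := - a / (b + 1).
have tb : t * (b + 1) = - a by rewrite /t mulrVK // unitfE; lra.
have t0 : 0 < t by rewrite /t divr_gt0 //; lra.
have := H t t0; nra.
Qed.

Lemma arith2 (a b : R) : (forall t, 0 < t -> t <= 1 -> 0 <= - 2 * t * a + t ^+ 2 * b) ->
  0 <= b -> a <= 0.
Proof.
move=> H hb; rewrite leNgt; apply/negP => ha.
pose t := a / (a + b).
have tb : t * (a + b) = a by rewrite /t mulrVK // unitfE; lra.
have t0 : 0 < t by rewrite /t divr_gt0 //; lra.
have t1 : t <= 1 by nra.
have := H t t0 t1; nra.
Qed.

Lemma bipolar n (C : set 'rV[R]_n) : closed C -> C 0 ->
  (forall x y, C x -> C y -> C (x + y)) ->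
  (forall (a : R) x, 0 <= a -> C x -> C (a *: x)) ->
  forall v, (forall f, dual_cone C f -> 0 <= dotv f v) -> C v.
Proof.
move=> Ccl C0 CD CZ v Hv; apply: contrapT => Cv.
pose d := fun x : 'rV[R]_n => dotv (x - v) (x - v).
have dcont : continuous d.
  rewrite /d /dotv.
  apply: (@continuous_big _ _ +%R 0 xpredT add_continuous) => i _.
  have -> : (fun x : 'rV[R]_n => (x - v) 0 i * (x - v) 0 i) =
     (fun x : 'rV[R]_n => x 0 i - v 0 i) \* (fun x : 'rV[R]_n => x 0 i - v 0 i).
    by apply/funext => z; rewrite !mxE.
  move=> y; apply: continuousM; apply: continuousB.
  - apply: (@coord_continuous R 1 n 0 i y).
  - apply: cst_continuous.
  - apply: (@coord_continuous R 1 n 0 i y).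
  - apply: cst_continuous.
pose S := d 0.
pose K := C `&` [set x | d x <= S].
have Kcl : closed K.
  apply: closedI => //.
  apply: (@preimage_closed _ _ d [set r | r <= S]); last exact: closed_le.
  by move=> x _; exact: dcont.
have coord_le : forall (x : 'rV[R]_n) i, (x 0 i - v 0 i) ^+ 2 <= d x.
  move=> x i; rewrite /d /dotv (bigD1 i) //= !mxE -expr2 lerDl.
  by apply: sumr_ge0 => j _; rewrite !mxE -expr2 sqr_ge0.
have Kb : bounded_set K.
  exists (2 + 2 * S); split; first by rewrite num_real.
  move=> M HM x [Cx dx]; rewrite /=; change (mx_norm x <= M); rewrite mx_normrE.
  have S0 : 0 <= S by exact: dotv_ge0.
  apply: bigmax_le; first lra.
  move=> [i j] _ /=; rewrite (ord1 i).
  have h1 := coord_le x j; have h2 := coord_le 0 j.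
  rewrite mxE sub0r sqrrN in h2.
  move: h1 h2 dx; rewrite /=; set a := x 0 j - v 0 j; set b := v 0 j => h1 h2 dx.
  have xe : x 0 j = a + b by rewrite /a /b; ring.
  have ha1 : a <= 1 + a ^+ 2 by nra.
  have ha2 : - a <= 1 + a ^+ 2 by nra.
  have hb1 : b <= 1 + b ^+ 2 by nra.
  have hb2 : - b <= 1 + b ^+ 2 by nra.
  have h2' : b ^+ 2 <= S := h2.
  have h1' : a ^+ 2 <= S := le_trans h1 dx.
  rewrite xe ler_norml; apply/andP; split; lra.
have Kc : compact K by exact: bounded_closed_compact.
have K0 : K !=set0 by exists 0; split => //=.
have Kcont : {within K, continuous d} by apply: continuous_subspaceT.
have [p /set_mem [Cp dp] pmin] := EVT_min_rV K0 Kc Kcont.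
have pminC : forall x, C x -> d p <= d x.
  move=> x Cx; have [dx|dx] := leP (d x) S.
    by apply: pmin; rewrite inE.
  exact: le_trans dp (ltW dx).
pose f := p - v.
have fdual : dual_cone C f.
  move=> x Cx; apply: (@arith1 (dotv f x) (dotv x x) _ (@dotv_ge0 _ x)) => t t0.
  have H : d p <= d (p + t *: x).
    by apply: pminC; apply: CD => //; apply: CZ => //; exact: ltW.
  have E : d (p + t *: x) = d p + 2 * t * dotv f x + t ^+ 2 * dotv x x.
    by rewrite /d /f /= dotv_expand.
  lra.
have fp : dotv f p <= 0.
  apply: (@arith2 (dotv f p) (dotv p p) _ (@dotv_ge0 _ p)) => t t0 t1.
  have H : d p <= d (p + (- t) *: p).
    apply: pminC; have -> : p + (- t) *: p = (1 - t) *: p by rewrite scalerBl scale1r scaleNr.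
    by apply: CZ => //; lra.
  have E : d (p + (- t) *: p) = d p + 2 * (- t) * dotv f p + (- t) ^+ 2 * dotv p p.
    by rewrite /d /f /= dotv_expand.
  have -> : - 2 * t * dotv f p + t ^+ 2 * dotv p p = 2 * (- t) * dotv f p + (- t) ^+ 2 * dotv p p.
    by rewrite sqrrN; ring.
  lra.
have fv : dotv f v = dotv f p - dotv f f.
  by rewrite -dotvB /f; congr dotv; rewrite opprB addrC subrK.
have ff : 0 < dotv f f.
  rewrite lt_def dotv_ge0 andbT; apply/eqP => /dotv_eq0 /eqP.
  by rewrite /f subr_eq0 => /eqP pv; apply: Cv; rewrite -pv.
have := Hv f fdual; lra.
Qed.

End Bip.

Section M.
Variable R : realType.

Lemma gamma2E (y : 'M[R]_3) k : gamma2 (@phiB R) y 0 k = 2^-1 * (y k ord0 + y ord0 k).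
Proof.
rewrite mxE /phiB !big_ord_recl big_ord0 !mxE /=; rewrite !big_ord0; ring.
Qed.

Lemma CB_facts (y : 'rV[R]_3) : CB y -> 0 <= y 0 ord0 /\ (y 0 ord0 = 0 -> y = 0).
Proof.
move=> [a [b [c [d [ha hb hc hd ->]]]]].

rewrite /xp0 /xm0 /x0p /x0m !mxE /=; split; first lra.
move=> h; have a0 : a = 0 by lra. have b0 : b = 0 by lra.
have c0 : c = 0 by lra. have d0 : d = 0 by lra.
by rewrite a0 b0 c0 d0 !scale0r !addr0.
Qed.

Lemma psi_dual (s t : R) : (s = 1 \/ s = -1) -> (t = 1 \/ t = -1) -> dual_cone (@CB R) (psi s t).
Proof.
move=> hs ht x [a [b [c [d [ha hb hc hd ->]]]]].
rewrite /dotv /psi /xp0 /xm0 /x0p /x0m !big_ord_recr big_ord0 /= !mxE /=.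
by case: hs => ->; case: ht => ->; lra.
Qed.

Lemma trip n m p (F : 'I_n -> R) (G : 'I_m -> R) (H : 'I_p -> R) c :
  c * (\sum_i F i) * (\sum_j G j) * (\sum_l H l) =
  \sum_i \sum_j \sum_l c * F i * G j * H l.
Proof.
have E : forall i, \sum_j \sum_l c * F i * G j * H l = c * F i * ((\sum_j G j) * \sum_l H l).
  move=> i; rewrite big_distrl mulr_sumr; apply: eq_bigr => j _.
  rewrite /= mulr_sumr mulr_sumr; apply: eq_bigr => l _; ring.
rewrite (eq_bigr _ (fun i _ => E i)) -big_distrl -mulr_sumr /=.
by rewrite !mulrA.
Qed.
End M.

Lemma part2 (R : realType) (y : 'M[R]_3) :
     2 *: gamma2 (@phiB R) y =
       (tform (psi 1 1) (psi 1 (-1)) y + tform (psi 1 (-1)) (psi 1 1) y) *: @xp0 R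
     + (tform (psi (-1) 1) (psi (-1) (-1)) y + tform (psi (-1) (-1)) (psi (-1) 1) y) *: @xm0 R
     + (tform (psi 1 1) (psi (-1) 1) y + tform (psi (-1) 1) (psi 1 1) y) *: @x0p R
     + (tform (psi 1 (-1)) (psi (-1) (-1)) y + tform (psi (-1) (-1)) (psi 1 (-1)) y) *: @x0m R.
Proof.
pose f := fun a b : nat => y (inord a) (inord b).
have E : forall i j : 'I_3, y i j = f i j by move=> i j; rewrite /f !inord_val.
apply/rowP => k; rewrite !mxE /tform /psi /phiB /xp0 /xm0 /x0p /x0m.
rewrite !big_ord_recr !big_ord0 /= !mxE /= !E /=.
case: k => [[|[|[|k]]] Hk] /=; [field|field|field|by []].

all: try (rewrite ?pnatr_eq0 //).
Qed.


Theorem mainTheorem15 (R : realType) :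
  (forall (n : nat) (CA : set 'rV[R]_n), proper_cone CA ->
     id_tens_gamma2 (@phiB R) @` tmax3 CA (@CB R) (@CB R) = tmin CA (@CB R)) /\
  (forall y : 'M[R]_3,
     2 *: gamma2 (@phiB R) y =
       (tform (psi 1 1) (psi 1 (-1)) y + tform (psi 1 (-1)) (psi 1 1) y) *: @xp0 R
     + (tform (psi (-1) 1) (psi (-1) (-1)) y + tform (psi (-1) (-1)) (psi (-1) 1) y) *: @xm0 R
     + (tform (psi 1 1) (psi (-1) 1) y + tform (psi (-1) 1) (psi 1 1) y) *: @x0p R
     + (tform (psi 1 (-1)) (psi (-1) (-1)) y + tform (psi (-1) (-1)) (psi 1 (-1)) y) *: @x0m R).
Proof.
split; last exact: part2.
move=> n CA [CAcl [CA0 CAD CAZ] _ _].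
apply/seteqP; split.
- move=> w [z Hz <-].
  pose Y i := \matrix_(j, l) z i j l : 'M[R]_3.
  pose V (g h : 'rV[R]_3) : 'rV[R]_n := \row_i tform g h (Y i).
  have VC : forall s t s' t', (s = 1 \/ s = -1) -> (t = 1 \/ t = -1) ->
      (s' = 1 \/ s' = -1) -> (t' = 1 \/ t' = -1) -> CA (V (psi s t) (psi s' t')).
    move=> s t s' t' hs ht hs' ht'.
    apply: (@bipolar R n CA CAcl CA0 CAD CAZ) => f fd.
    have := Hz f (psi s t) (psi s' t') fd (@psi_dual R _ _ hs ht) (@psi_dual R _ _ hs' ht').
    congr (_ <= _); rewrite /dotv; apply: eq_bigr => i _.
    rewrite mxE /tform mulr_sumr; apply: eq_bigr => j _.
    rewrite mulr_sumr; apply: eq_bigr => l _; rewrite /Y mxE; ring.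
  have o1 : (1 : R) = 1 \/ (1 : R) = -1 by left.
  have m1 : (-1 : R) = 1 \/ (-1 : R) = -1 by right.
  pose A (t : 'I_4) : 'rV[R]_n :=
    if val t == 0%N then V (psi 1 1) (psi 1 (-1)) + V (psi 1 (-1)) (psi 1 1)
    else if val t == 1%N then V (psi (-1) 1) (psi (-1) (-1)) + V (psi (-1) (-1)) (psi (-1) 1)
    else if val t == 2%N then V (psi 1 1) (psi (-1) 1) + V (psi (-1) 1) (psi 1 1)
    else V (psi 1 (-1)) (psi (-1) (-1)) + V (psi (-1) (-1)) (psi 1 (-1)).
  pose B (t : 'I_4) : 'rV[R]_3 :=
    if val t == 0%N then xp0 R else if val t == 1%N then xm0 R
    else if val t == 2%N then x0p R else x0m R.
  exists 4%N, (fun=> 4^-1), (fun t => 2 *: A t), B; split.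
  + by move=> _; rewrite invr_ge0.
  + by rewrite !big_ord_recr big_ord0 /=; field.
  + move=> t; apply: CAZ; first lra.
    rewrite /A.
    case: t => [[|[|[|[|t]]]] Ht] /=; apply: CAD; apply: VC => //.
  + move=> t; rewrite /B.
    case: t => [[|[|[|[|t]]]] Ht] /=.
    * by exists 1, 0, 0, 0; split => //; rewrite scale1r !scale0r !addr0.
    * by exists 0, 1, 0, 0; split => //; rewrite scale1r !scale0r add0r !addr0.
    * by exists 0, 0, 1, 0; split => //; rewrite scale1r !scale0r !add0r addr0.
    * by exists 0, 0, 0, 1; split => //; rewrite scale1r !scale0r !add0r.
    * by [].
  + apply/matrixP => i k; rewrite summxE !big_ord_recr big_ord0 /=.
    rewrite /id_tens_gamma2 !mxE /tform /psi /phiB /Y.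
    pose f := fun a b : nat => z i (inord a) (inord b).
    have E : forall a b : 'I_3, z i a b = f a b by move=> a b; rewrite /f !inord_val.
    rewrite !big_ord_recr !big_ord0 /= !mxE /= !E /=.
    case: k => [[|[|[|k]]] Hk] /=; [by field|by field|by field|by []].
- move=> _ [k [lam [xs [ys [hl hs hx hy ->]]]]].
  pose c (t : 'I_k) := lam t / ys t 0 ord0.
  exists (fun i j l => \sum_t c t * xs t 0 i * ys t 0 j * ys t 0 l).
  + move=> f g h fd gd hd.
    have -> : \sum_i \sum_j \sum_l f 0 i * g 0 j * h 0 l *
                (\sum_t c t * xs t 0 i * ys t 0 j * ys t 0 l) =
              \sum_t c t * dotv f (xs t) * dotv g (ys t) * dotv h (ys t).
      rewrite /dotv [RHS](eq_bigr _ (fun t _ => @trip R n 3 3 (fun i => f 0 i * xs t 0 i)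
        (fun j => g 0 j * ys t 0 j) (fun l => h 0 l * ys t 0 l) (c t))).
      rewrite [RHS]exchange_big /=; apply: eq_bigr => i _.
      rewrite [RHS]exchange_big /=; apply: eq_bigr => j _.
      rewrite [RHS]exchange_big /=; apply: eq_bigr => l _.
      rewrite mulr_sumr; apply: eq_bigr => t _; ring.
    apply: sumr_ge0 => t _.
    have [y0 _] := @CB_facts R _ (hy t).
    apply: mulr_ge0; [apply: mulr_ge0; [apply: mulr_ge0|]|].
    * exact: divr_ge0.
    * exact: fd.
    * exact: gd.
    * exact: hd.
  + apply/matrixP => i j; rewrite /id_tens_gamma2 mxE gamma2E !mxE summxE.
    rewrite -big_split mulr_sumr /=; apply: eq_bigr => t _.
    rewrite !mxE /c.
    have [y0 y00] := @CB_facts R _ (hy t).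
    have [e|nz] := eqVneq (ys t 0 ord0) 0.
      by rewrite (y00 e) !mxE; ring.
    by field.
Qed.
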